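(* TC-Approval is monotonic, while UC-Approval and CO-Approval are not monotonic.
   Context: A tournament $T=(V(T),\succ)$ is a finite set of candidates with an asymmetric and complete binary relation $\succ$; $N^+_T(c)=\{b:c\succ b\}$ and $T[B]$ is the induced subtournament. Tournament solutions: the top cycle $TC(T)$ is the unique minimal nonempty $X\subseteq V(T)$ with $x\succ y$ for all $x\in X$, $y\notin X$; the Copeland set $CO(T)$ is the set of candidates of maximum outdegree; the uncovered set $UC(T)$ is the set of kings, where $a$ is a king if for every $b\neq a$, either $a\succ b$ or there is $c$ with $a\succ c\succ b$. An election $\mathcal{E}=(\mathcal{C},\mathcal{T})$ has a finite candidate set and a finite list of votes, each a tournament on $\mathcal{C}$. For a tournament solution $f$, $f$-Approval gives candidate $c$ score $|\{T\in\mathcal{T}: c\in f(T)\}|$ (with multiplicity); winners are those of highest score. A voting correspondence $\varphi$ is monotonic if for every two elections $\mathcal{E}=(\mathcal{C},(T_1,\dots,T_n))$, $\mathcal{E}'=(\mathcal{C},(T'_1,\dots,T'_n))$ and every $c\in\varphi(\mathcal{E})$ such that for every $i$, $T_i[\mathcal{C}\setminus\{c\}]=T'_i[\mathcal{C}\setminus\{c\}]$ and $N^+_{T_i}(c)\subseteq N^+_{T'_i}(c)$, it holds that $c\in\varphi(\mathcal{E}')$. *)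

(* Defs.v *)
From mathcomp Require Import all_boot.
Set Implicit Arguments. Unset Strict Implicit. Unset Printing Implicit Defensive.

Record tournament (C : finType) := Tournament {
  tbeats :> rel C;
  tbeats_irr : forall x, ~~ tbeats x x;
  tbeats_asym : forall x y, tbeats x y -> ~~ tbeats y x;
  tbeats_total : forall x y, x != y -> tbeats x y || tbeats y x
}.

Definition tsolution := forall C : finType, tournament C -> {set C}.

Definition vcorrespondence :=
  forall (C : finType) (n : nat), ('I_n -> tournament C) -> {set C}.

Section Solutions.
Variables (C : finType) (T : tournament C).

Definition dominant_nonempty (X : {set C}) : bool :=
  (X != set0) && [forall x in X, forall y in ~: X, T x y].

(* Top cycle: the (unique) minimal nonempty dominant set. *)
Definition TC : {set C} :=
  [set x | [exists X : {set C}, minset dominant_nonempty X && (x \in X)]].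

Definition outdeg (a : C) : nat := #|[set b | T a b]|.

Definition CO : {set C} := [set a | [forall b, outdeg b <= outdeg a]].

(* Uncovered set: the set of kings. *)
Definition king (a : C) : bool :=
  [forall b, (b != a) ==> (T a b || [exists c, T a c && T c b])].
Definition UC : {set C} := [set a | king a].

End Solutions.

Definition approval_score (f : tsolution) (C : finType) (n : nat)
  (votes : 'I_n -> tournament C) (c : C) : nat :=
  #|[set i : 'I_n | c \in f C (votes i)]|.

Definition approval (f : tsolution) : vcorrespondence :=
  fun C n votes =>
    [set c | [forall d, approval_score f votes d <= approval_score f votes c]].

Definition improves (C : finType) (c : C) (T T' : tournament C) : Prop :=
  (forall x y, x != c -> y != c -> T x y = T' x y) /\
  (forall b, T c b -> T' c b).

Definition monotonic (phi : vcorrespondence) : Prop :=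
  forall (C : finType) (n : nat) (votes votes' : 'I_n -> tournament C) (c : C),
    (forall i, improves c (votes i) (votes' i)) ->
    c \in phi C n votes -> c \in phi C n votes'.

(* Main.v *)
Require Import Defs.
From mathcomp Require Import all_boot.
Set Implicit Arguments. Unset Strict Implicit. Unset Printing Implicit Defensive.

Section TCTheory.
Variables (C : finType).
Implicit Types (T : tournament C) (X Y : {set C}).

Lemma domP T X : dominant_nonempty T X -> forall x y, x \in X -> y \notin X -> T x y.
Proof.
case/andP=> _ /forallP H x y xX yX.
have := forallP (implyP (H x) xX) y.
by rewrite inE yX => /implyP; apply.
Qed.

Lemma domI T X : X != set0 -> (forall x y, x \in X -> y \notin X -> T x y) ->
  dominant_nonempty T X.
Proof.
move=> X0 H; apply/andP; split => //.
apply/forallP=> x; apply/implyP=> xX; apply/forallP=> y; apply/implyP.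
rewrite inE => yX; exact: H.
Qed.

Lemma dom_ne T X : dominant_nonempty T X -> X != set0.
Proof. by case/andP. Qed.

Lemma nested T X Y : dominant_nonempty T X -> dominant_nonempty T Y ->
  X \subset Y \/ Y \subset X.
Proof.
move=> dX dY; case: (boolP (X \subset Y)) => [h|/subsetPn [x xX xY]]; [by left|right].
apply/subsetP => y yY; apply/negPn/negP => yX.
have h1 := domP dX xX yX; have h2 := domP dY yY xY.
by move: (tbeats_asym h1); rewrite h2.
Qed.

Lemma TCP T x : reflect (forall Y, dominant_nonempty T Y -> x \in Y) (x \in TC T).
Proof.
rewrite inE; apply: (iffP existsP).
  case=> X /andP[mX xX] Y dY.
  have [sXY|sYX] := nested (minsetp mX) dY; first exact: (subsetP sXY).
  by rewrite (minsetinf mX dY sYX).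
move=> H.
have dT : dominant_nonempty T setT.
  apply: domI; first by apply/set0Pn; exists x; rewrite inE.
  by move=> a b _; rewrite inE.
case: (minset_exists dT) => X mX _; exists X; rewrite mX /=.
apply: H; exact: minsetp mX.
Qed.

Variables (c : C) (T T' : tournament C).
Hypothesis Himp : improves c T T'.

Lemma D1 X : dominant_nonempty T X -> c \in X -> dominant_nonempty T' X.
Proof.
move=> dX cX; apply: domI; first exact: dom_ne dX.
move=> x y xX yX; have yc : y != c by apply/eqP => e; rewrite e cX in yX.
have h := domP dX xX yX.
case: (eqVneq x c) => [e|xc]; first by rewrite e; apply: Himp.2; rewrite -e.
by rewrite -(Himp.1 x y xc yc).
Qed.

Lemma D2 X : dominant_nonempty T' X -> c \notin X -> dominant_nonempty T X.
Proof.
move=> dX cX; apply: domI; first exact: dom_ne dX.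
move=> x y xX yX; have xc : x != c by apply/eqP => e; rewrite -e xX in cX.
have h := domP dX xX yX.
case: (eqVneq y c) => [e|yc]; last by rewrite (Himp.1 x y xc yc).
rewrite e; rewrite e in h.
case/orP: (@tbeats_total _ T x c xc) => // hc.
by move: (tbeats_asym (Himp.2 _ hc)); rewrite h.
Qed.

Lemma D3 Y : dominant_nonempty T Y -> c \notin Y -> (forall y, y \in Y -> T' y c) ->
  dominant_nonempty T' Y.
Proof.
move=> dY cY H; apply: domI; first exact: dom_ne dY.
move=> x y xY yY; have xc : x != c by apply/eqP => e; rewrite -e xY in cY.
case: (eqVneq y c) => [->|yc]; first exact: H.
rewrite -(Himp.1 x y xc yc). exact: (domP dY xY yY).
Qed.

Lemma tc_a : c \in TC T -> c \in TC T'.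
Proof.
move/TCP=> H; apply/TCP => Y dY; apply/negPn/negP => cY.
by move: (H _ (D2 dY cY)); rewrite (negbTE cY).
Qed.

Lemma tc_b d : c \in TC T -> d \in TC T' -> d \in TC T.
Proof.
move/TCP=> Hc /TCP Hd; apply/TCP => Y dY.
exact: Hd (D1 dY (Hc _ dY)).
Qed.

Lemma tc_c d : c \notin TC T' -> d \in TC T' -> d \in TC T.
Proof.
move=> cT' /TCP Hd.
case: (boolP [exists Z, dominant_nonempty T' Z && (c \notin Z)]);
  last first.
  move/existsPn => H; case/negP: cT'; apply/TCP => Y dY.
  by move: (H Y); rewrite dY /= negbK.
case/existsP=> Z /andP[dZ cZ].
have dZT := D2 dZ cZ.
apply/TCP => Y dY.
case: (nested dY dZT) => [sYZ|sZY]; last exact: (subsetP sZY) _ (Hd _ dZ).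
apply: Hd; apply: D3 => //.
  by apply/negP => cY; move/negP: cZ; apply; apply: (subsetP sYZ).
move=> y yY; exact: (domP dZ (subsetP sYZ _ yY) cZ).
Qed.

Lemma vote_ineq d :
  (d \in TC T') + (c \in TC T) <= (d \in TC T) + (c \in TC T').
Proof.
move: tc_a (@tc_b d) (@tc_c d).
case: (c \in TC T); case: (c \in TC T'); case: (d \in TC T); case: (d \in TC T') => //=.
all: try by move=> /(_ isT).
all: try by move=> _ /(_ isT isT).
all: by move=> _ _ /(_ isT isT).
Qed.

End TCTheory.

Lemma card_set_sum (I : finType) (P : pred I) :
  #|[set i | P i]| = \sum_(i : I) (P i : nat).
Proof.
rewrite -sum1_card big_mkcond /=; apply: eq_bigr => i _.
by rewrite inE; case: (P i).
Qed.

Lemma TC_monotonic : monotonic (approval TC).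
Proof.
move=> C n votes votes' c Himp; rewrite !inE => /forallP H; apply/forallP => d.
rewrite /approval_score.
have key : #|[set i | d \in TC (votes' i)]| + #|[set i | c \in TC (votes i)]| <=
           #|[set i | d \in TC (votes i)]| + #|[set i | c \in TC (votes' i)]|.
  rewrite !card_set_sum -!big_split /=; apply: leq_sum => i _.
  exact: vote_ineq.
have := H d; rewrite /approval_score => Hd.
rewrite -(leq_add2r #|[set i | c \in TC (votes i)]|).
apply: leq_trans key _.
by rewrite addnC leq_add2l.
Qed.

Section Enum.
Variables (T : finType) (s : seq T).
Hypotheses (us : uniq s) (ms : forall x, x \in s).

Lemma forall_s (P : pred T) : [forall x, P x] = all P s.
Proof.
apply/forallP/allP => [H x _|H x]; first exact: H.
exact: H (ms x).
Qed.

Lemma card_s (P : pred T) : #|[set x | P x]| = count P s.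
Proof.
rewrite -size_filter; move/card_uniqP: (filter_uniq P us) => <-.
apply: eq_card => x; by rewrite inE mem_filter ms andbT.
Qed.
End Enum.

Definition o4_0 : 'I_4 := @Ordinal 4 0 isT.
Definition o4_1 : 'I_4 := @Ordinal 4 1 isT.
Definition o4_2 : 'I_4 := @Ordinal 4 2 isT.
Definition o4_3 : 'I_4 := @Ordinal 4 3 isT.
Definition e4 := [:: o4_0; o4_1; o4_2; o4_3].
Lemma e4_uniq : uniq e4. Proof. by []. Qed.
Lemma e4_mem x : x \in e4. Proof. by case: x => [[|[|[|[|m]]]] H]. Qed.

Definition o2_0 : 'I_2 := @Ordinal 2 0 isT.
Definition o2_1 : 'I_2 := @Ordinal 2 1 isT.
Definition e2 := [:: o2_0; o2_1].
Lemma e2_uniq : uniq e2. Proof. by []. Qed.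
Lemma e2_mem x : x \in e2. Proof. by case: x => [[|[|m]] H]. Qed.

Definition tour_ok (r : rel 'I_4) :=
  all (fun x => ~~ r x x) e4 &&
  all (fun x => all (fun y => (r x y ==> ~~ r y x) && ((x != y) ==> r x y || r y x)) e4) e4.

Lemma allI (P : pred 'I_4) : all P e4 -> forall x, P x.
Proof. by move/allP=> H x; apply: H; rewrite e4_mem. Qed.

Section MK.
Variables (r : rel 'I_4) (H : tour_ok r).
Lemma mk_irr x : ~~ r x x.
Proof. by case/andP: H => /allI. Qed.
Lemma mk_asym x y : r x y -> ~~ r y x.
Proof. case/andP: H => _ /allI /(_ x) /allI /(_ y) /andP[/implyP h _]; exact h. Qed.
Lemma mk_tot x y : x != y -> r x y || r y x.
Proof. case/andP: H => _ /allI /(_ x) /allI /(_ y) /andP[_ /implyP h]; exact h. Qed.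
Definition mkT : tournament 'I_4 := Tournament mk_irr mk_asym mk_tot.
End MK.

Definition erel (E : seq (nat * nat)) : rel 'I_4 :=
  fun x y => (nat_of_ord x, nat_of_ord y) \in E.

Definition vs (A B : tournament 'I_4) : 'I_2 -> tournament 'I_4 :=
  fun i => if val i == 0 then A else B.

Lemma improves_check (c : 'I_4) (T T' : tournament 'I_4) :
  all (fun x => all (fun y => (x != c) ==> (y != c) ==> (T x y == T' x y)) e4) e4 &&
  all (fun b => T c b ==> T' c b) e4 -> improves c T T'.
Proof.
case/andP=> /allI H1 /allI H2; split.
  move=> x y xc yc; have := allI (H1 x) y.
  by rewrite xc yc => /eqP.
by move=> b; move: (H2 b) => /implyP.
Qed.

Lemma improves_refl (c : 'I_4) (T : tournament 'I_4) : improves c T T.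
Proof. by split. Qed.

Lemma approval_e (f : tsolution) (g : tournament 'I_4 -> 'I_4 -> bool)
  (Hg : forall T d, (d \in f _ T) = g T d) (votes : 'I_2 -> tournament 'I_4) c :
  (c \in approval f votes) =
  all (fun d => g (votes o2_0) d + g (votes o2_1) d <=
                g (votes o2_0) c + g (votes o2_1) c) e4.
Proof.
rewrite inE (forall_s e4_mem) /approval_score.
apply: eq_all => d; rewrite !(card_s e2_uniq e2_mem) /= !Hg.
by rewrite !addn0.
Qed.

Definition gUC (T : tournament 'I_4) (a : 'I_4) : bool :=
  all (fun b => (b != a) ==> (T a b || has (fun c => T a c && T c b) e4)) e4.

Lemma gUC_ok T d : (d \in UC T) = gUC T d.
Proof.
rewrite inE /king (forall_s e4_mem); apply: eq_all => b.
congr (_ ==> (_ || _)).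
apply/existsP/hasP => [[x h]|[x _ h]]; [by exists x; rewrite ?e4_mem | by exists x].
Qed.

Definition gCO (T : tournament 'I_4) (a : 'I_4) : bool :=
  all (fun b => count (T b) e4 <= count (T a) e4) e4.

Lemma gCO_ok T d : (d \in CO T) = gCO T d.
Proof.
rewrite inE (forall_s e4_mem); apply: eq_all => b.
by rewrite /outdeg !(card_s e4_uniq e4_mem).
Qed.

Definition U1 := mkT (r := erel [:: (0, 3); (1, 0); (2, 0); (2, 1); (3, 1); (3, 2)]) (erefl true).
Definition U1' := mkT (r := erel [:: (0, 2); (0, 3); (1, 0); (2, 1); (3, 1); (3, 2)]) (erefl true).
Definition U2 := mkT (r := erel [:: (1, 0); (1, 2); (1, 3); (2, 0); (3, 0); (3, 2)]) (erefl true).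

Definition K1 := mkT (r := erel [:: (1, 0); (2, 0); (2, 1); (3, 0); (3, 1); (3, 2)]) (erefl true).
Definition K1' := mkT (r := erel [:: (0, 3); (1, 0); (2, 0); (2, 1); (3, 1); (3, 2)]) (erefl true).
Definition K2 := mkT (r := erel [:: (0, 2); (0, 3); (1, 0); (2, 1); (2, 3); (3, 1)]) (erefl true).

Lemma counter (f : tsolution) g (Hg : forall T d, (d \in f _ T) = g T d)
  (A A' B : tournament 'I_4) :
  improves o4_0 A A' ->
  all (fun d => g A d + g B d <= g A o4_0 + g B o4_0) e4 ->
  ~~ all (fun d => g A' d + g B d <= g A' o4_0 + g B o4_0) e4 ->
  ~ monotonic (approval f).
Proof.
move=> imp h1 h2 M.
have Himp : forall i, improves o4_0 (vs A B i) (vs A' B i).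
  by case=> [[|[|m]] Hm] //; first [exact: imp | exact: improves_refl].
have := M _ _ _ _ _ Himp.
rewrite !(approval_e Hg) /vs /= => /(_ h1).
by move/negP: h2.
Qed.

Theorem theorem3 :
  monotonic (approval TC) /\
  ~ monotonic (approval UC) /\
  ~ monotonic (approval CO).
Proof.
split; first exact: TC_monotonic.
split.
  apply: (@counter UC gUC gUC_ok U1 U1' U2).
  - by apply: improves_check; vm_compute.
  - by vm_compute.
  - by vm_compute.
apply: (@counter CO gCO gCO_ok K1 K1' K2).
- by apply: improves_check; vm_compute.
- by vm_compute.
- by vm_compute.
Qed.
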